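(* Let $F:\{0,1\}^4\to\mathbb{Q}_{\ge0}$. Suppose that $F(\overline{e_1}),F(\overline{e_2}),F(\overline{e_3}),F(\overline{e_4})$ are not all zero, that $F(x_1,x_2,x_3,x_4)=0$ whenever $x_1+x_2+x_3+x_4$ is even, and that for all $x_1,x_2,x_3,x_4\in\{0,1\}$, $F(x_1,x_2,x_3,x_4)F(1-x_1,1-x_2,1-x_3,1-x_4)\le F(x_1,x_2,1-x_3,1-x_4)F(1-x_1,1-x_2,x_3,x_4)+F(x_1,1-x_2,x_3,1-x_4)F(1-x_1,x_2,1-x_3,x_4)+F(x_1,1-x_2,1-x_3,x_4)F(1-x_1,x_2,x_3,1-x_4)$. Then $F$ has a matchings circuit.
   Context: $e_i\in\{0,1\}^4$ is the $i$-th unit vector and $\overline{x}$ denotes the complement $(1-x_1,\dots,1-x_4)$. A matchings circuit $G$ consists of: a finite set $J$ of incidences; a finite vertex set $V$ with sets $J_v$ partitioning $J$; a set $A\subseteq J$ of external edges; a partition $E$ of $J\setminus A$ into pairs (internal edges); a rational edge-weight $w(e)\ge0$ for each $e\in E$; and a rational fugacity $\lambda(v)\ge0$ for each $v$. For $F'\subseteq A\cup E$, $\deg_{F'}(v)$ is the number of incidences in $J_v$ belonging to edges of $F'$; $\mathrm{wt}_G(F')=0$ if some $\deg_{F'}(v)\ge2$, else $\prod_{v:\deg_{F'}(v)=0}\lambda(v)\prod_{e\in F'\cap E}w(e)$. The signature $[\![G]\!]:\{0,1\}^A\to\mathbb{Q}_{\ge0}$ is $[\![G]\!](x)=\sum\mathrm{wt}_G(F')$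 over $F'\subseteq A\cup E$ with $F'\cap A=\{a:x_a=1\}$. $F$ has a matchings circuit if $F=[\![G]\!]$ for some $G$ with $A$ identified with $\{1,2,3,4\}$. *)

(* Defs.v *)
From HB Require Import structures.
From mathcomp Require Import all_boot all_order all_algebra.
Unset Printing Implicit Defensive.
Import Order.TTheory GRing.Theory Num.Theory.
Local Open Scope ring_scope.

(* A matchings circuit with four external edges.
   - J : incidences; V : vertices; [vtx j] is the vertex whose block J_v
     contains j (so the J_v := vtx^-1(v) partition J).
   - ext : 'I_4 -> J, injective; A := image of ext (identifies A with {1,..,4}).
   - E : internal edges, a partition of J \ A into 2-element sets.
   - w : edge weights (nonnegative on E); lam : fugacities (nonnegative). *)
Record matchings_circuit := MC {
  mc_J : finType;
  mc_V : finType;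
  mc_vtx : mc_J -> mc_V;
  mc_ext : 'I_4 -> mc_J;
  mc_E : {set {set mc_J}};
  mc_w : {set mc_J} -> rat;
  mc_lam : mc_V -> rat;
  mc_ext_inj : injective mc_ext;
  mc_E_pairs : forall e, e \in mc_E -> #|e| = 2%N;
  mc_E_partition : partition mc_E (~: (mc_ext @: [set: 'I_4]));
  mc_w_ge0 : forall e, e \in mc_E -> 0 <= mc_w e;
  mc_lam_ge0 : forall v, 0 <= mc_lam v
}.

(* Incidences belonging to edges of F' = {a : x_a = 1} ∪ S, S ⊆ E. *)
Definition mc_covered (G : matchings_circuit) (x : 'I_4 -> bool)
    (S : {set {set mc_J G}}) : {set mc_J G} :=
  [set mc_ext G i | i in [set i | x i]] :|: cover S.

Definition mc_deg (G : matchings_circuit) (x : 'I_4 -> bool)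
    (S : {set {set mc_J G}}) (v : mc_V G) : nat :=
  #|[set j in mc_covered G x S | mc_vtx G j == v]|.

Definition mc_wt (G : matchings_circuit) (x : 'I_4 -> bool)
    (S : {set {set mc_J G}}) : rat :=
  if [forall v, (mc_deg G x S v <= 1)%N] then
    (\prod_(v | mc_deg G x S v == 0%N) mc_lam G v) * \prod_(e in S) mc_w G e
  else 0.

Definition mc_sig (G : matchings_circuit) (x : 'I_4 -> bool) : rat :=
  \sum_(S in powerset (mc_E G)) mc_wt G x S.

Definition tup4 (x1 x2 x3 x4 : bool) : 'I_4 -> bool :=
  fun i => nth false [:: x1; x2; x3; x4] i.

Definition has_matchings_circuit (F : bool -> bool -> bool -> bool -> rat) :=
  exists G : matchings_circuit,
    forall x1 x2 x3 x4, F x1 x2 x3 x4 = mc_sig G (tup4 x1 x2 x3 x4).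

(* Main.v *)
Require Import Defs.
From HB Require Import structures.
From mathcomp Require Import all_boot all_order all_algebra.
Import Order.TTheory GRing.Theory Num.Theory.
Local Open Scope ring_scope.
From mathcomp Require Import lra.
Lemma K4 (g0 g1 g2 g3 : rat) : 0 <= g0 -> 0 <= g1 -> 0 <= g2 -> 0 <= g3 ->
  g0 <= g1 + g2 + g3 -> g1 <= g0 + g2 + g3 -> g2 <= g0 + g1 + g3 -> g3 <= g0 + g1 + g2 ->
  exists M01 M02 M03 M12 M13 M23 : rat,
   [/\ 0 <= M01, 0 <= M02, 0 <= M03, 0 <= M12 & 0 <= M13] /\ 0 <= M23 /\
   [/\ M01 + M02 + M03 = g0, M01 + M12 + M13 = g1, M02 + M12 + M23 = g2
     & M03 + M13 + M23 = g3].
Proof.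
move=> h0 h1 h2 h3 i0 i1 i2 i3.
pose d1 := g0 + g1 - g2 - g3. pose d2 := g0 + g2 - g1 - g3. pose d3 := g0 + g3 - g1 - g2.
have hD : `|d1| + `|d2| + `|d3| <= g0 + g1 + g2 + g3.
  have [p1|p1] := lerP 0 d1; have [p2|p2] := lerP 0 d2; have [p3|p3] := lerP 0 d3;
  rewrite ?(ger0_norm p1) ?(ltr0_norm p1) ?(ger0_norm p2) ?(ltr0_norm p2)
     ?(ger0_norm p3) ?(ltr0_norm p3) /d1 /d2 /d3; lra.
have n1 := ler_norm d1. have n2 := ler_norm d2. have n3 := ler_norm d3.
have m1 := ler_norm (- d1). have m2 := ler_norm (- d2). have m3 := ler_norm (- d3).
rewrite normrN in m1; rewrite normrN in m2; rewrite normrN in m3.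
pose t := (g0 + g1 + g2 + g3 - (`|d1| + `|d2| + `|d3|)) / 12.
exists ((`|d1| + d1)/4 + t), ((`|d2| + d2)/4 + t), ((`|d3| + d3)/4 + t),
       ((`|d3| - d3)/4 + t), ((`|d2| - d2)/4 + t), ((`|d1| - d1)/4 + t).
rewrite /t /d1 /d2 /d3 in hD n1 n2 n3 m1 m2 m3 *.
split; [split|split; [|split]]; lra.
Qed.

Definition zz (ai aj wi wj M W : rat) :=
  ((if wi == 0 then ai else 0) + (if wj == 0 then aj else 0)) / W + M / (wi * wj).

Lemma zz_sym ai aj wi wj M W : zz ai aj wi wj M W = zz aj ai wj wi M W.
Proof. by rewrite /zz (addrC (if wi == 0 then _ else _)) (mulrC wi). Qed.

Lemma zz_term ai aj wi wj M W : (wj = 0 -> M = 0) ->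
  wj * zz ai aj wi wj M W = wj * (if wi == 0 then ai else 0) / W + M / wi.
Proof.
move=> hM; rewrite /zz; have [e|nz] := eqVneq wj 0.
  by rewrite e hM // !mul0r.
rewrite addr0 mulrDr mulrA; congr (_ + _).
by rewrite invfM mulrCA [wj * _]mulrCA mulfV // mulr1.
Qed.

Lemma row (ai wi W wA wB wC aA aB aC MA MB MC : rat) :
  W = wi + wA + wB + wC -> 0 < W -> MA + MB + MC = ai * wi ->
  (wA = 0 -> MA = 0) -> (wB = 0 -> MB = 0) -> (wC = 0 -> MC = 0) ->
  wA * zz ai aA wi wA MA W + wB * zz ai aB wi wB MB W + wC * zz ai aC wi wC MC W = ai.
Proof.
move=> hW W0 hs hA hB hC; rewrite !zz_term //.
have -> : wA * (if wi == 0 then ai else 0) / W + MA / wi + (wB * (if wi == 0 then ai else 0) / W + MB / wi) +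
  (wC * (if wi == 0 then ai else 0) / W + MC / wi) =
  (wA + wB + wC) * (if wi == 0 then ai else 0) / W + (MA + MB + MC) / wi.
  rewrite !mulrDl; lra.
rewrite hs; have [e|nz] := eqVneq wi 0.
  have sW : wA + wB + wC = W by rewrite hW e add0r.
  rewrite e.
  rewrite ?eqxx mulr0 mul0r addr0 sW mulrAC mulfV ?mul1r // gt_eqF //.
by rewrite mulr0 mul0r add0r mulfK.
Qed.

Lemma zz_ge0 ai aj wi wj M W : 0 <= ai -> 0 <= aj -> 0 <= wi -> 0 <= wj -> 0 <= M -> 0 <= W ->
  0 <= zz ai aj wi wj M W.
Proof.
move=> *; rewrite /zz; apply: addr_ge0; apply: divr_ge0 => //; last exact: mulr_ge0.
by apply: addr_ge0; case: ifP.
Qed.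

Lemma LP (a0 a1 a2 a3 w0 w1 w2 w3 : rat) : 0 <= a0 -> 0 <= a1 -> 0 <= a2 -> 0 <= a3 ->
  0 <= w0 -> 0 <= w1 -> 0 <= w2 -> 0 <= w3 -> 0 < w0 + w1 + w2 + w3 ->
  a0 * w0 <= a1 * w1 + a2 * w2 + a3 * w3 -> a1 * w1 <= a0 * w0 + a2 * w2 + a3 * w3 ->
  a2 * w2 <= a0 * w0 + a1 * w1 + a3 * w3 -> a3 * w3 <= a0 * w0 + a1 * w1 + a2 * w2 ->
  exists z01 z02 z03 z12 z13 z23 : rat,
   [/\ 0 <= z01, 0 <= z02, 0 <= z03, 0 <= z12 & 0 <= z13] /\ 0 <= z23 /\
   [/\ w1 * z01 + w2 * z02 + w3 * z03 = a0, w0 * z01 + w2 * z12 + w3 * z13 = a1,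
       w0 * z02 + w1 * z12 + w3 * z23 = a2 & w0 * z03 + w1 * z13 + w2 * z23 = a3].
Proof.
move=> ha0 ha1 ha2 ha3 hw0 hw1 hw2 hw3 hW i0 i1 i2 i3.
have [M01 [M02 [M03 [M12 [M13 [M23 [[p01 p02 p03 p12 p13] [p23 [s0 s1 s2 s3]]]]]]]]] :=
  K4 _ _ _ _ (mulr_ge0 ha0 hw0) (mulr_ge0 ha1 hw1) (mulr_ge0 ha2 hw2) (mulr_ge0 ha3 hw3) i0 i1 i2 i3.
set W := w0 + w1 + w2 + w3.
have Z0 : w0 = 0 -> [/\ M01 = 0, M02 = 0 & M03 = 0].
  by move=> e; rewrite e mulr0 in s0; split; lra.
have Z1 : w1 = 0 -> [/\ M01 = 0, M12 = 0 & M13 = 0].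
  by move=> e; rewrite e mulr0 in s1; split; lra.
have Z2 : w2 = 0 -> [/\ M02 = 0, M12 = 0 & M23 = 0].
  by move=> e; rewrite e mulr0 in s2; split; lra.
have Z3 : w3 = 0 -> [/\ M03 = 0, M13 = 0 & M23 = 0].
  by move=> e; rewrite e mulr0 in s3; split; lra.
have hW0 : 0 <= W by apply: ltW.
exists (zz a0 a1 w0 w1 M01 W), (zz a0 a2 w0 w2 M02 W), (zz a0 a3 w0 w3 M03 W),
  (zz a1 a2 w1 w2 M12 W), (zz a1 a3 w1 w3 M13 W), (zz a2 a3 w2 w3 M23 W).
split; first by split; eapply zz_ge0; eassumption.
split; first by eapply zz_ge0; eassumption.
split.
- apply: row; [rewrite /W; lra | done | done | by move/Z1=>[] | by move/Z2=>[] | by move/Z3=>[]].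
- rewrite (zz_sym a0 a1); apply: row; [rewrite /W; lra | done | done | by move/Z0=>[] | by move/Z2=>[] | by move/Z3=>[]].
- rewrite (zz_sym a0 a2) (zz_sym a1 a2); apply: row; [rewrite /W; lra | done | done | by move/Z0=>[] | by move/Z1=>[] | by move/Z3=>[]].
- rewrite (zz_sym a0 a3) (zz_sym a1 a3) (zz_sym a2 a3); apply: row; [rewrite /W; lra | done | done | by move/Z0=>[] | by move/Z1=>[] | by move/Z2=>[]].
Qed.

Definition pl (b : bool) (k : nat) : nat :=
  nth 0%N (if b then [:: 4; 4; 4; 4; 1; 2; 3; 2; 3; 3]%N
                else [:: 0; 1; 2; 3; 0; 0; 0; 1; 1; 2]%N) k.

Lemma pl_lt b k : (pl b k < 5)%N.
Proof. rewrite /pl; case: b; do 10 (case: k => [|k] //); by case: k. Qed.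

Definition Jt := ('I_4 + ('I_10 * bool))%type.
Definition vtx (j : Jt) : 'I_5 :=
  match j with inl i => inord i | inr (k, b) => inord (pl b k) end.
Definition eset (k : 'I_10) : {set Jt} := [set inr (k, false); inr (k, true)].
Definition Eset : {set {set Jt}} := [set eset k | k in [set: 'I_10]].
Definition wfun (wt : nat -> rat) (e : {set Jt}) : rat := \sum_(k | eset k == e) wt k.

Lemma eset_inj : injective eset.
Proof.
move=> k1 k2 /setP/(_ (inr (k1, false))); rewrite !inE eqxx /=.
by case/esym/orP => /eqP [].
Qed.

Lemma inl_inj' : injective (@inl 'I_4 ('I_10 * bool)%type).
Proof. by move=> x y []. Qed.

Lemma Epairs e : e \in Eset -> #|e| = 2%N.
Proof. case/imsetP => k _ ->; rewrite /eset cards2.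
by have -> : (inr (k, false) == inr (k, true) :> Jt) = false by apply/eqP => -[].
Qed.

Lemma Epart : partition Eset (~: (inl @: [set: 'I_4])).
Proof.
apply/and3P; split.
- apply/eqP/setP => j; rewrite /cover [in RHS]inE; apply/bigcupP/idP.
  + case=> e /imsetP [k _ ->]; rewrite !inE => /orP [] /eqP ->;
    by apply/imsetP => [[i _]].
  + case: j => [i|[k b]].
      by rewrite mem_imset ?in_setT //; exact: inl_inj'.
    move=> _; exists (eset k); first by rewrite mem_imset ?in_setT //; exact: eset_inj.
    by rewrite !inE; case: b; rewrite eqxx ?orbT.
- apply/trivIsetP => A B /imsetP [k1 _ ->] /imsetP [k2 _ ->] ne.
  have nk : k1 != k2 by apply: contraNneq ne => ->.
  rewrite -setI_eq0; apply/eqP/setP => j; rewrite !inE.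
  have inrk : forall k k' b b', (inr (k, b) : Jt) = inr (k', b') -> k = k' by move=> ???? [].
  apply/negbTE/negP => /andP [] /orP [] /eqP -> /orP [] /eqP /inrk e;
  by rewrite e eqxx in nk.
- by apply/imsetP => -[k _] /setP /(_ (inr (k, true))); rewrite !inE eqxx orbT.
Qed.

Lemma wfun_ge0 (wt : nat -> rat) : (forall k, 0 <= wt k) ->
  forall e, e \in Eset -> 0 <= wfun wt e.
Proof. by move=> h e _; apply: sumr_ge0. Qed.

Lemma lam_ge0 : forall v : 'I_5, 0 <= (fun _ => 0 : rat) v.
Proof. by []. Qed.

Definition Gc (wt : nat -> rat) (hw : forall k, 0 <= wt k) : matchings_circuit :=
  @MC Jt 'I_5 vtx inl Eset (wfun wt) (fun _ => 0) inl_inj' Epairs Epart (wfun_ge0 wt hw) lam_ge0.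

Definition bits (T : {set 'I_10}) : seq bool := [seq (inord i : 'I_10) \in T | i <- iota 0 10].

Definition degc (xs t : seq bool) (v : nat) : nat :=
  (sumn [seq (nth false xs i && (i == v)) : nat | i <- iota 0 4]
  + sumn [seq (nth false t k && (pl true k == v)) : nat | k <- iota 0 10]
  + sumn [seq (nth false t k && (pl false k == v)) : nat | k <- iota 0 10])%N.

Lemma sum_iota (f : nat -> nat) n : (\sum_(i < n) f i)%N = sumn [seq f i | i <- iota 0 n].
Proof. by rewrite sumnE big_map -(big_mkord xpredT f) /index_iota subn0. Qed.

Lemma bits_nth T (k : 'I_10) : nth false (bits T) k = (k \in T).
Proof. by rewrite /bits (nth_map 0%N) ?size_iota // nth_iota // add0n inord_val. Qed.

Lemma deg_eq wt hw (xs : seq bool) (T : {set 'I_10}) (v : 'I_5) :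
  mc_deg (Gc wt hw) (fun i => nth false xs i) (eset @: T) v = degc xs (bits T) v.
Proof.
rewrite /mc_deg -sum1_card big_mkcond /= big_sumType /=.
set S := [set j in _ | _].
rewrite (eq_bigr (fun p : 'I_10 * bool => (if inr (p.1, p.2) \in S then 1 else 0)%N)); last by case.
rewrite -(pair_bigA _ (fun k b => if inr (k, b) \in S then 1%N else 0%N)) /S.
have covl i : (inl i \in mc_covered (Gc wt hw) (fun i => nth false xs i) (eset @: T)) = nth false xs i.
  rewrite /mc_covered !inE /= mem_imset ?inE; last exact: inl_inj'.
  case: (nth false xs i) => //=; apply/negbTE/negP; rewrite /cover => /bigcupP [e /imsetP [k _ ->]].
  by rewrite !inE.
have covr k b : ((inr (k, b) : Jt) \in [set inl i | i : 'I_4 & nth false xs i])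
     || (inr (k, b) \in cover [set eset x | x in T]) = (k \in T).
  apply/orP/idP.
  - case; first by case/imsetP.
    rewrite /cover => /bigcupP [e /imsetP [k' kT ->]].
    by rewrite !inE => /orP [] /eqP [->].
  - move=> kT; right; rewrite /cover; apply/bigcupP; exists (eset k); first exact: imset_f.
    by rewrite !inE; case: b; rewrite eqxx ?orbT.
rewrite /degc -addnA; congr (_ + _)%N.
  rewrite -sum_iota; apply: eq_bigr => i _; rewrite inE covl /=.
  rewrite -val_eqE /= inordK; last by apply: leq_trans (ltn_ord i) _.
  by case: (_ && _).
rewrite -!sum_iota -big_split /=; apply: eq_bigr => k _.
rewrite big_bool !inE /= !covr /= -!val_eqE /= !inordK ?pl_lt // bits_nth.
by case: (k \in T); case: (_ == _); case: (_ == _).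
Qed.

Definition pbc (xs t : seq bool) : bool := all (fun v => degc xs t v == 1%N) (iota 0 5).

Lemma forall_iota n (P : pred nat) : [forall v : 'I_n, P v] = all P (iota 0 n).
Proof.
rewrite -val_enum_ord all_map; apply/forallP/allP => [h v _|h v]; first exact: h.
by apply: h; rewrite mem_enum.
Qed.

Lemma wt_eq wt hw xs (T : {set 'I_10}) :
  mc_wt (Gc wt hw) (fun i => nth false xs i) (eset @: T) =
  if pbc xs (bits T) then \prod_(k in T) wt k else 0.
Proof.
rewrite /mc_wt.
have hd v := deg_eq wt hw xs T v.
have E1 : [forall v, (mc_deg (Gc wt hw) (fun i => nth false xs i) (eset @: T) v <= 1)%N]
        = [forall v : 'I_5, (degc xs (bits T) v <= 1)%N].
  by apply: eq_forallb => v; rewrite hd.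
have Ep : pbc xs (bits T) = [forall v : 'I_5, degc xs (bits T) v == 1%N].
  by rewrite /pbc -forall_iota.
case P: (pbc xs (bits T)).
- have all1 : forall v : 'I_5, degc xs (bits T) v = 1%N.
    by move: P; rewrite Ep => /forallP h v; apply/eqP.
  have -> : [forall v, (mc_deg (Gc wt hw) (fun i => nth false xs i) (eset @: T) v <= 1)%N].
    by rewrite E1; apply/forallP => v; rewrite all1.
  rewrite big_pred0 => [|v]; last by rewrite hd all1.
  rewrite mul1r big_imset /=; last by move=> ? ? _ _; exact: eset_inj.
  apply: eq_bigr => k _; rewrite /wfun (eq_bigl (pred1 k)) ?big_pred1_eq // => k'.
  by rewrite /= (inj_eq eset_inj).
- move: P; rewrite Ep => /negbT /forallPn [v hv].
  case: ifP => // H.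
  have h1 : (degc xs (bits T) v <= 1)%N by move: H; rewrite E1 => /forallP.
  have h0 : degc xs (bits T) v = 0%N.
    by move: h1 hv; case: (degc xs (bits T) v) => [|[|]].
  by rewrite (bigD1 v) /= ?hd ?h0 // mul0r mul0r.
Qed.

Lemma pow_E : powerset Eset = [set (fun T : {set 'I_10} => eset @: T) T | T in [set: {set 'I_10}]].
Proof.
apply/setP => S; rewrite powersetE; apply/idP/imsetP.
- move=> sub; exists [set k | eset k \in S]; first by rewrite in_setT.
  apply/setP => e; apply/idP/imsetP.
  + move=> eS; have := subsetP sub e eS; case/imsetP => k _ ek.
    by exists k; rewrite // inE -ek.
  + by case=> k; rewrite inE => kS ->.
- case=> T _ ->; exact: imsetS (subsetT _).
Qed.

Fixpoint allbits n : seq (seq bool) :=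
  if n is n'.+1 then map (cons true) (allbits n') ++ map (cons false) (allbits n')
  else [:: [::]].

Lemma allbits_size n p : p \in allbits n -> size p = n.
Proof.
elim: n p => [|n IH] p /=; first by rewrite inE => /eqP ->.
by rewrite mem_cat => /orP [] /mapP [q /IH <- ->].
Qed.

Lemma allbits_full n p : size p = n -> p \in allbits n.
Proof.
elim: n p => [|n IH] [|b p] //= sp; try by rewrite inE.
case: sp => sp; by rewrite mem_cat; case: b; rewrite map_f ?orbT // IH.
Qed.

Lemma allbits_uniq n : uniq (allbits n).
Proof.
elim: n => [|n IH] //=; rewrite cat_uniq !map_inj_uniq // ?IH ?andbT; try by move=> ? ? [].
by apply/hasPn => p /mapP [q _ ->]; apply/mapP => -[r _].
Qed.

Definition setof (p : seq bool) : {set 'I_10} := [set k : 'I_10 | nth false p k].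

Lemma bits_setof p : size p = 10%N -> bits (setof p) = p.
Proof.
move=> sp; rewrite /bits -[in RHS](mkseq_nth false p) sp /mkseq.
apply/eq_in_map => i; rewrite mem_iota add0n => /andP [_ hi].
by rewrite inE inordK.
Qed.

Lemma setof_bits T : setof (bits T) = T.
Proof. by apply/setP => k; rewrite inE bits_nth. Qed.

Lemma sum_pb (P : seq bool -> bool) (h : {set 'I_10} -> rat) :
  \sum_(T in [set: {set 'I_10}]) (if P (bits T) then h T else 0) =
  \sum_(p <- filter P (allbits 10)) h (setof p).
Proof.
set s := map setof (filter P (allbits 10)).
have us : uniq s.
  rewrite map_inj_in_uniq ?filter_uniq ?allbits_uniq // => p q.
  rewrite !mem_filter => /andP [_ /allbits_size sp] /andP [_ /allbits_size sq] e.
  by rewrite -(bits_setof p sp) -(bits_setof q sq) e.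
have hz T : T \notin s -> (if P (bits T) then h T else 0) = 0.
  case E: (P (bits T)) => // /negP []; rewrite -(setof_bits T); apply: map_f.
  by rewrite mem_filter E allbits_full // size_map size_iota.
rewrite (eq_bigr (fun T => if T \in s then (if P (bits T) then h T else 0) else 0)); last first.
  by move=> T _; case: (boolP (T \in s)) => // nT; rewrite hz.
rewrite -big_mkcondr.
rewrite (eq_bigl (fun T => T \in s)); last by move=> T; rewrite in_setT.
rewrite -big_uniq // big_map; apply: eq_big_seq => p.
rewrite mem_filter => /andP [Pp /allbits_size sp].
by rewrite bits_setof // Pp.
Qed.

Definition prodw (wt : nat -> rat) (p : seq bool) : rat :=
  \prod_(i <- iota 0 10) (if nth false p i then wt i else 1).

Lemma prod_setof (wt : nat -> rat) p : \prod_(k in setof p) wt k = prodw wt p.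
Proof.
rewrite big_mkcond /prodw -[iota 0 10]/(index_iota 0 10) big_mkord.
by apply: eq_bigr => k _; rewrite inE.
Qed.

Lemma sig_eq wt hw xs : mc_sig (Gc wt hw) (fun i => nth false xs i) =
  \sum_(p <- filter (pbc xs) (allbits 10)) prodw wt p.
Proof.
rewrite /mc_sig.
change (mc_E (Gc wt hw)) with Eset.
rewrite pow_E big_imset; last by move=> ? ? _ _; apply: (imset_inj eset_inj).
rewrite (eq_bigr (fun T => if pbc xs (bits T) then \prod_(k in T) wt k else 0)); last first.
  by move=> T _; rewrite wt_eq.
rewrite sum_pb; apply: eq_bigr => p _; exact: prod_setof.
Qed.

Ltac compf := match goal with |- context [filter (pbc ?xs) (allbits 10)] =>
  let r := eval vm_compute in (filter (pbc xs) (allbits 10)) in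
  rewrite (_ : filter (pbc xs) (allbits 10) = r); [| by vm_compute] end.

Theorem lemma20 (F : bool -> bool -> bool -> bool -> rat)
  (Hnn : forall x1 x2 x3 x4, 0 <= F x1 x2 x3 x4)
  (Hnz : ~ [/\ F false true true true = 0, F true false true true = 0,
              F true true false true = 0 & F true true true false = 0])
  (Hpar : forall x1 x2 x3 x4 : bool,
      ~~ odd (x1 + x2 + x3 + x4) -> F x1 x2 x3 x4 = 0)
  (Hineq : forall x1 x2 x3 x4 : bool,
      F x1 x2 x3 x4 * F (~~ x1) (~~ x2) (~~ x3) (~~ x4) <=
        F x1 x2 (~~ x3) (~~ x4) * F (~~ x1) (~~ x2) x3 x4
      + F x1 (~~ x2) x3 (~~ x4) * F (~~ x1) x2 (~~ x3) x4
      + F x1 (~~ x2) (~~ x3) x4 * F (~~ x1) x2 x3 (~~ x4)) :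
  has_matchings_circuit F.
Proof.
have W0 : 0 < F false true true true + F true false true true + F true true false true + F true true true false.
  case: (ltrP 0 (F false true true true + F true false true true + F true true false true + F true true true false)) => // h.
  exfalso; apply: Hnz.
  have := Hnn false true true true; have := Hnn true false true true;
  have := Hnn true true false true; have := Hnn true true true false => *.
  split; lra.
have h0 := Hineq true false false false; have h1 := Hineq false true false false.
have h2 := Hineq false false true false; have h3 := Hineq false false false true.
simpl in h0, h1, h2, h3.
have [z01 [z02 [z03 [z12 [z13 [z23 [[p01 p02 p03 p12 p13] [p23 [e0 e1 e2 e3]]]]]]]]] :=
  LP _ _ _ _ _ _ _ _ (Hnn true false false false) (Hnn false true false false) (Hnn false false true false)
     (Hnn false false false true) (Hnn false true true true) (Hnn true false true true)
     (Hnn true true false true) (Hnn true true true false) W0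
     ltac:(lra) ltac:(lra) ltac:(lra) ltac:(lra).
pose wt := fun k => nth 0 [:: F false true true true; F true false true true;
   F true true false true; F true true true false; z23; z13; z12; z03; z02; z01] k.
have hw : forall k, 0 <= wt k.
  by move=> k; rewrite /wt; case: k => [|[|[|[|[|[|[|[|[|[|k]]]]]]]]]] /=; rewrite ?Hnn ?nth_nil ?lexx.
exists (Gc wt hw) => x1 x2 x3 x4.
rewrite /tup4 sig_eq.
case: x1; case: x2; case: x3; case: x4; compf;
  rewrite ?big_cons ?big_nil /prodw /index_iota /= ?big_cons ?big_nil /wt /=;
  first [ by rewrite Hpar | lra ].
Qed.
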